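(* Let $\mathscr H$ be a real Hilbert space, $\mathscr A\subseteq\mathscr H$ a closed linear subspace, $\mathsf Z$ a countable index set, $(h_k)_{k\in\mathsf Z}$ an orthogonal family of nonzero vectors with $P_{\mathscr A}h_k\neq 0$ for all $k$, and $\mathbf s=(\mathrm s_k)$ a real sequence with $(\mathrm s_k/\|h_k\|)_k\in\ell^2(\mathsf Z)$. For $k\in\mathsf Z$ let $P_k$ be the orthogonal projection onto $\mathscr S_k:=\{v\in\mathscr A:\langle v,h_k\rangle=\mathrm s_k\}$, and set $\mu_k:=\|P_{\mathscr A}h_k\|^2/\|h_k\|^2$. Then $\mu_k\in(0,1]$ for every $k$, and for every $u\in\mathscr A$, $$P_{\mathscr A}P_{\mathscr C_{\mathbf s}}u=u+\sum_{k\in\mathsf Z}\mu_k\,(P_k u-u),$$ where $\mathscr C_{\mathbf s}:=\{v\in\mathscr H:\langle v,h_k\rangle=\mathrm s_k\ \forall k\in\mathsf Z\}$.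
   Context: $P_{\mathscr V}$ denotes orthogonal projection (nearest-point map) onto a nonempty closed affine subspace $\mathscr V$ of $\mathscr H$. *)

(* Defs.v *)
From HB Require Import structures.
From mathcomp Require Import all_boot all_order all_algebra.
From mathcomp Require Import all_classical all_reals all_analysis.
Set Implicit Arguments. Unset Strict Implicit. Unset Printing Implicit Defensive.
Import Order.TTheory GRing.Theory Num.Theory.
Import numFieldNormedType.Exports.
Local Open Scope classical_set_scope.
Local Open Scope ring_scope.

(* A real Hilbert space is modelled as a complete normed R-module H together
   with a symmetric bilinear form [ip] that induces the norm:
   ip x x = `|x|^2.  (Positive definiteness follows from the norm axioms.) *)
Definition is_inner_product (R : realType) (H : normedModType R)
  (ip : H -> H -> R) : Prop :=
  [/\ (forall x y, ip x y = ip y x),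
      (forall a x y z, ip (a *: x + y) z = a * ip x z + ip y z)
    & (forall x, ip x x = `|x| ^+ 2)].

Definition closed_subspace (R : realType) (H : normedModType R) (A : set H) :=
  [/\ A 0, (forall x y, A x -> A y -> A (x + y)),
      (forall (a : R) x, A x -> A (a *: x)) & closed A].

Definition is_nearest (R : realType) (H : normedModType R) (C : set H) (x p : H) :=
  C p /\ (forall y, C y -> `|x - p| <= `|x - y|).

(* P_C : nearest-point map (well defined and unique for nonempty closed
   affine subspaces of a Hilbert space); chosen with xget. *)
Definition nearest_proj (R : realType) (H : normedModType R) (C : set H) (x : H) : H :=
  xget 0 (is_nearest C x).

(* unconditional convergence of \sum_{k in Z} f k to l (net of finite subsets) *)
Definition has_usum (R : realType) (H : normedModType R) (Z : eqType)
  (f : Z -> H) (l : H) : Prop :=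
  forall e : R, 0 < e -> exists s0 : seq Z, forall s : seq Z,
    uniq s -> {subset s0 <= s} -> `|\sum_(k <- s) f k - l| < e.

(* Main.v *)
Require Import Defs.
From HB Require Import structures.
From mathcomp Require Import all_boot all_order all_algebra.
From mathcomp Require Import all_classical all_reals all_analysis.
From mathcomp Require Import ring lra.
Import Order.TTheory GRing.Theory Num.Theory.
Import numFieldNormedType.Exports.
Local Open Scope classical_set_scope.
Local Open Scope ring_scope.

Set Implicit Arguments. Unset Strict Implicit. Unset Printing Implicit Defensive.

Section IP.
Context (R : realType) (H : normedModType R) (ip : H -> H -> R)
  (Hip : is_inner_product ip).

Lemma ipC x y : ip x y = ip y x. Proof. by case: Hip. Qed.
Lemma ipxx x : ip x x = `|x| ^+ 2. Proof. by case: Hip. Qed.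
Lemma ipL a x y z : ip (a *: x + y) z = a * ip x z + ip y z. Proof. by case: Hip. Qed.
Lemma ip0l z : ip 0 z = 0.
Proof. have := ipL 1 0 0 z; rewrite scaler0 addr0 mul1r => e. lra. Qed.
Lemma ipDl x y z : ip (x + y) z = ip x z + ip y z.
Proof. by rewrite -[x]scale1r ipL mul1r scale1r. Qed.
Lemma ipZl a x z : ip (a *: x) z = a * ip x z.
Proof. by rewrite -[a *: x]addr0 ipL ip0l addr0. Qed.
Lemma ipNl x z : ip (- x) z = - ip x z.
Proof. by rewrite -scaleN1r ipZl mulN1r. Qed.
Lemma ipBl x y z : ip (x - y) z = ip x z - ip y z.
Proof. by rewrite ipDl ipNl. Qed.
Lemma ip0r z : ip z 0 = 0. Proof. by rewrite ipC ip0l. Qed.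
Lemma ipDr x y z : ip z (x + y) = ip z x + ip z y.
Proof. by rewrite ipC ipDl !(ipC z). Qed.
Lemma ipZr a x z : ip z (a *: x) = a * ip z x.
Proof. by rewrite ipC ipZl ipC. Qed.
Lemma ipNr x z : ip z (- x) = - ip z x.
Proof. by rewrite ipC ipNl ipC. Qed.
Lemma ipBr x y z : ip z (x - y) = ip z x - ip z y.
Proof. by rewrite ipDr ipNr. Qed.
Lemma ip_suml (I : Type) (t : seq I) (f : I -> H) z :
  ip (\sum_(k <- t) f k) z = \sum_(k <- t) ip (f k) z.
Proof. elim: t => [|a t IH]; first by rewrite !big_nil ip0l. by rewrite !big_cons ipDl IH. Qed.
Lemma ip_sumr (I : Type) (t : seq I) (f : I -> H) z :
  ip z (\sum_(k <- t) f k) = \sum_(k <- t) ip z (f k).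
Proof. rewrite ipC ip_suml; apply: eq_bigr => k _; exact: ipC. Qed.

Lemma normD2 x y : `|x + y| ^+ 2 = `|x| ^+ 2 + 2 * ip x y + `|y| ^+ 2.
Proof. rewrite -!ipxx ipDl !ipDr (ipC y x); ring. Qed.
Lemma normB2 x y : `|x - y| ^+ 2 = `|x| ^+ 2 - 2 * ip x y + `|y| ^+ 2.
Proof. rewrite normD2 ipNr normrN; ring. Qed.

Lemma CS x y : `|ip x y| <= `|x| * `|y|.
Proof.
have e1 : 4 * ip x y = `|x + y| ^+ 2 - `|x - y| ^+ 2 by rewrite normD2 normB2; ring.
have t1 : `|x + y| <= `|x| + `|y| := ler_normD x y.
have t2 : `|x - y| <= `|x| + `|y| by rewrite -(normrN y) ler_normD.
have t3 : `|x| - `|y| <= `|x - y| by rewrite lerBlDr (le_trans _ (ler_normD _ y)) // subrK.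
have t4 : `|y| - `|x| <= `|x - y| by rewrite distrC lerBlDr (le_trans _ (ler_normD _ x)) // subrK.
have n1 := normr_ge0 (x + y); have n2 := normr_ge0 (x - y).
have n3 := normr_ge0 x; have n4 := normr_ge0 y.
have p1 : `|x + y| ^+ 2 <= (`|x| + `|y|) ^+ 2 by rewrite lerXn2r // ?nnegrE; lra.
have p2 : (`|x| - `|y|) ^+ 2 <= `|x - y| ^+ 2.
  have q : 0 <= (`|x - y| - (`|x| - `|y|)) * (`|x - y| - (`|y| - `|x|)) by apply: mulr_ge0; rewrite subr_ge0. nra.
have p3 : `|x - y| ^+ 2 <= (`|x| + `|y|) ^+ 2 by rewrite lerXn2r // ?nnegrE; lra.
have p4 : (`|x| - `|y|) ^+ 2 <= `|x + y| ^+ 2.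
  have t5 : `|x| - `|y| <= `|x + y| by have := ler_normD (x+y) (-y); rewrite addrK normrN; lra.
  have t6 : `|y| - `|x| <= `|x + y| by have := ler_normD (x+y) (-x); rewrite addrAC subrr add0r normrN; lra.
  have q : 0 <= (`|x + y| - (`|x| - `|y|)) * (`|x + y| - (`|y| - `|x|)) by apply: mulr_ge0; rewrite subr_ge0. nra.
rewrite ler_norml; apply/andP; split; nra.
Qed.

Lemma ip_gt0 x : x != 0 -> 0 < ip x x.
Proof. by move=> nx; rewrite ipxx exprn_gt0 // normr_gt0. Qed.
End IP.

Lemma inv_nat_lt (R : realType) (e : R) : 0 < e -> exists n : nat, n.+1%:R^-1 < e.
Proof.
move=> e0; exists (Num.Def.archi_bound e^-1).
have ie : 0 <= e^-1 by rewrite invr_ge0 ltW.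
have h := archi_boundP ie.
rewrite -(ltf_pV2 (x:=e)) ?invrK ?posrE ?ltr0Sn //.
by rewrite (lt_le_trans h) // ler_nat.
Qed.

Section Usum.
Context (R : realType) (V : normedModType R) (Z : eqType).
Implicit Types (f g : Z -> V) (l : V).

Lemma usum_uniq f l1 l2 : has_usum f l1 -> has_usum f l2 -> l1 = l2.
Proof.
move=> h1 h2; apply/eqP; rewrite -subr_eq0 -normr_eq0; apply/eqP.
apply/eqP; rewrite eq_le normr_ge0 andbT; apply/negPn/negP; rewrite -ltNge => d0.
have e0 : 0 < `|l1 - l2| / 2 by rewrite divr_gt0.
have [s1 H1] := h1 _ e0; have [s2 H2] := h2 _ e0.
set s := undup (s1 ++ s2).
have us : uniq s by exact: undup_uniq.
have ss1 : {subset s1 <= s} by move=> x xs; rewrite mem_undup mem_cat xs.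
have ss2 : {subset s2 <= s} by move=> x xs; rewrite mem_undup mem_cat xs orbT.
have a1 := H1 s us ss1; have a2 := H2 s us ss2.
have : `|l1 - l2| <= `|\sum_(k <- s) f k - l1| + `|\sum_(k <- s) f k - l2|.
  by rewrite -(normrN (_ - l1)) (le_trans _ (ler_normD _ _)) // opprB addrA subrK.
move: a1 a2; set a := `|_ - l1|; set b := `|_ - l2|; set c := `|l1 - l2|. lra.
Qed.

Lemma usum_ext f g l : (forall k, f k = g k) -> has_usum f l -> has_usum g l.
Proof. by move=> e; have -> : f = g by apply: funext. Qed.

Lemma usum0 : has_usum (fun _ : Z => (0 : V)) 0.
Proof. by move=> e e0; exists [::] => s _ _; rewrite big1 // subrr normr0. Qed.

Lemma usum_delta (j : Z) (v : V) : has_usum (fun k => if k == j then v else 0) v.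
Proof.
move=> e e0; exists [:: j] => s us sub.
rewrite -big_mkcond /= big_const_seq.
have -> : count (fun k => k == j) s = 1%N.
  by have := count_uniq_mem j us; rewrite sub ?mem_head //= => <-; apply: eq_count => k.
by rewrite /= addr0 subrr normr0.
Qed.

Lemma usum_scale f l (a : R) : has_usum f l -> has_usum (fun k => a *: f k) (a *: l).
Proof.
move=> h e e0.
have e1 : 0 < e / (`|a| + 1) by rewrite divr_gt0 // ltr_wpDl.
have [s0 H0] := h _ e1; exists s0 => s us sub.
rewrite -scaler_sumr -scalerBr normrZ.
have := H0 s us sub; set x := `|_ - l| => hx.
have xa : 0 <= x by exact: normr_ge0.
rewrite (le_lt_trans (y := (`|a| + 1) * x)) //.
  by rewrite ler_wpM2r // lerDl.
by rewrite mulrC -ltr_pdivlMr // ltr_wpDl.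
Qed.

Lemma usum_opp f l : has_usum f l -> has_usum (fun k => - f k) (- l).
Proof.
move=> h; have := @usum_scale f l (-1) h; rewrite scaleN1r; apply: usum_ext => k; by rewrite scaleN1r.
Qed.
Lemma usum_oppE f l : has_usum (fun k => - f k) (- l) -> has_usum f l.
Proof. move=> /usum_opp; rewrite opprK; apply: usum_ext => k; exact: opprK. Qed.

Lemma sum_in (A : set V) (t : seq Z) f :
  A 0 -> (forall x y, A x -> A y -> A (x + y)) -> (forall k, A (f k)) ->
  A (\sum_(k <- t) f k).
Proof. by move=> A0 AD Af; elim: t => [|a t IH]; rewrite ?big_nil ?big_cons //; apply: AD. Qed.

Lemma usum_closed (A : set V) f l : closed_subspace A -> (forall k, A (f k)) ->
  has_usum f l -> A l.
Proof.
case=> A0 AD AZ cA Af h; apply: cA => B /nbhs_ballP [e /= e0 eB].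
have [s0 H0] := h _ e0.
exists (\sum_(k <- undup s0) f k); split; first exact: sum_in.
apply: eB; rewrite -ball_normE /= -normrN opprB.
apply: H0; [exact: undup_uniq | by move=> x; rewrite mem_undup].
Qed.

Definition utail f (e : R) (s0 : seq Z) := forall t, uniq t ->
  (forall k, k \in t -> k \notin s0) -> `|\sum_(k <- t) f k| < e.
Definition ucauchy f := forall e : R, 0 < e -> exists s0, uniq s0 /\ utail f e s0.

Lemma split_sum f (s0 s : seq Z) : uniq s0 -> uniq s -> {subset s0 <= s} ->
  \sum_(k <- s) f k = \sum_(k <- s0) f k + \sum_(k <- [seq k <- s | k \notin s0]) f k.
Proof.
move=> u0 u sub; rewrite (bigID (mem s0)) /= big_filter; congr (_ + _).
rewrite -big_filter; apply: perm_big; apply: uniq_perm => //.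
  exact: filter_uniq.
by move=> x; rewrite mem_filter; case: (boolP (x \in s0)) => // /sub ->.
Qed.

Lemma utail_diff f e s0 s : utail f e s0 -> uniq s0 -> uniq s -> {subset s0 <= s} ->
  `|\sum_(k <- s) f k - \sum_(k <- s0) f k| < e.
Proof.
move=> ht u0 u sub; rewrite (@split_sum f s0 s u0 u sub) addrAC subrr add0r; apply: ht.
  exact: filter_uniq.
by move=> k; rewrite mem_filter => /andP[].
Qed.

Lemma ucauchy_le f g : (forall t, uniq t -> `|\sum_(k <- t) g k| <= `|\sum_(k <- t) f k|) ->
  ucauchy f -> ucauchy g.
Proof.
move=> le hf e e0; have [s0 [u0 H0]] := hf e e0; exists s0; split => // t ut dt.
exact: le_lt_trans (le t ut) (H0 t ut dt).
Qed.
End Usum.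

Lemma ucauchy_usum (R : realType) (V : completeNormedModType R) (Z : eqType) (f : Z -> V) :
  ucauchy f -> exists l, has_usum f l.
Proof.
move=> hc.
have : forall n : nat, exists s0, uniq s0 /\ utail f n.+1%:R^-1 s0.
  by move=> n; apply: hc; rewrite invr_gt0 ltr0Sn.
move/choice => [S HS].
pose T n := undup (flatten [seq S i | i <- iota 0 n.+1]).
have uT n : uniq (T n) by exact: undup_uniq.
have sT n m : (n <= m)%N -> {subset S n <= T m}.
  move=> nm x xs; rewrite mem_undup; apply/flatten_mapP; exists n => //.
  by rewrite mem_iota add0n ltnS nm.
pose x n := \sum_(k <- T n) f k.
have key n m : (n <= m)%N -> `|x m - \sum_(k <- S n) f k| < n.+1%:R^-1.
  move=> nm; have [u0 t0] := HS n; exact: utail_diff t0 u0 (uT m) (sT _ _ nm).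
have cx : cvg (x @ \oo).
  apply/cauchy_cvgP/cauchy_exP => e e0.
  have [n hn] := inv_nat_lt e0.
  exists (\sum_(k <- S n) f k); exists n => // m /= nm.
  rewrite -ball_normE /= -normrN opprB; exact: lt_trans (key n m nm) hn.
exists (lim (x @ \oo)) => e e0.
set l := lim _.
have e4 : 0 < e / 4 by rewrite divr_gt0.
have [n hn] := inv_nat_lt e4.
have [u0 t0] := HS n.
exists (S n) => s us sub.
have a1 := utail_diff t0 u0 us sub.
have [N _ HN] := (cvgrPdist_lt _ _).1 cx _ e4.
set m := maxn n N.
have b1 := key n m (leq_maxl _ _).
have b2 : `|l - x m| < e / 4 by apply: HN; rewrite /= leq_maxr.
set c := \sum_(k <- S n) f k; set y := \sum_(k <- s) f k.
have -> : y - l = (y - c) + (c - x m) + (x m - l).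
  by rewrite !addrA subrK subrK.
have t1 := ler_normD (y - c + (c - x m)) (x m - l).
have t2 := ler_normD (y - c) (c - x m).
rewrite (distrC c) in t2; rewrite (distrC (x m)) in t1.
move: a1 b1 b2 hn t1 t2; set a := `|y - c|; set b := `|x m - c|; set d := `|l - x m|.
set z := `|_ + _|; set w := `|_ + _|; set q := n.+1%:R^-1 => ha hb hd hq h1 h2.
lra.
Qed.

Lemma tail_nonneg (R : realType) (Z : eqType) (phi : Z -> R) (M : R) :
  (forall k, 0 <= phi k) -> (forall t, uniq t -> \sum_(k <- t) phi k <= M) ->
  forall e, 0 < e -> exists s0, uniq s0 /\ forall t, uniq t ->
    (forall k, k \in t -> k \notin s0) -> \sum_(k <- t) phi k < e.
Proof.
move=> p0 bd e e0.
pose E := [set x | exists t, uniq t /\ x = \sum_(k <- t) phi k].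
have hs : has_sup E.
  split; first by exists 0; exists [::]; rewrite big_nil.
  by exists M => _ [t [ut ->]]; exact: bd.
have [_ [s0 [u0 ->]] hx] := sup_adherent e0 hs.
exists s0; split => // t ut dt.
have uc : uniq (s0 ++ t).
  rewrite cat_uniq u0 ut andbT; apply/hasPn => k /dt //.
have : \sum_(k <- s0 ++ t) phi k <= sup E by apply: sup_upper_bound => //; exists (s0 ++ t).
rewrite big_cat /=; lra.
Qed.

Section Orth.
Context (R : realType) (H : normedModType R) (ip : H -> H -> R)
  (Hip : is_inner_product ip).

Lemma norm_orth_sum (Z : eqType) (g : Z -> H) (t : seq Z) : uniq t ->
  (forall j k, j != k -> ip (g j) (g k) = 0) ->
  `|\sum_(k <- t) g k| ^+ 2 = \sum_(k <- t) `|g k| ^+ 2.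
Proof.
move=> ut og; elim: t ut => [|a t IH]; first by rewrite !big_nil normr0 expr0n.
move=> /= /andP[aNt ut]; rewrite !big_cons (normD2 Hip) IH //.
rewrite (ip_sumr Hip) big1_seq ?mulr0 ?add0r ?addr0 //.
move=> k /= kt; apply: og; apply/eqP => ak; rewrite -ak in kt; by rewrite kt in aNt.
Qed.

Lemma ucauchy_orth (Z : eqType) (g : Z -> H) (M : R) :
  (forall j k, j != k -> ip (g j) (g k) = 0) ->
  (forall t, uniq t -> \sum_(k <- t) `|g k| ^+ 2 <= M) -> ucauchy g.
Proof.
move=> og bd e e0.
have [s0 [u0 H0]] := tail_nonneg (fun k => sqr_ge0 `|g k|) bd (mulr_gt0 e0 e0).
exists s0; split => // t ut dt.
have := H0 t ut dt; rewrite -norm_orth_sum // => h.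
move: (normr_ge0 (\sum_(k <- t) g k)) h; rewrite expr2; move: `|_| => X X0 h; nra.
Qed.
End Orth.

Section Proj.
Context (R : realType) (H : normedModType R) (ip : H -> H -> R)
  (Hip : is_inner_product ip).

Lemma le_sq (a b : R) : 0 <= a -> 0 <= b -> a ^+ 2 <= b ^+ 2 -> a <= b.
Proof. move=> a0 b0; rewrite !expr2 => h; nra. Qed.

Lemma pyth x p y : ip (x - p) (y - p) = 0 ->
  `|x - y| ^+ 2 = `|x - p| ^+ 2 + `|y - p| ^+ 2.
Proof.
move=> o; have -> : x - y = (x - p) - (y - p) by rewrite opprB addrA subrK.
by rewrite (normB2 Hip) o mulr0 subr0.
Qed.

Lemma proj_eq (C : set H) x p : C p -> (forall y, C y -> ip (x - p) (y - p) = 0) ->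
  nearest_proj C x = p.
Proof.
move=> Cp o.
have np : is_nearest C x p.
  split => // y Cy; apply: le_sq; rewrite ?normr_ge0 // (pyth (o y Cy)).
  by rewrite lerDl sqr_ge0.
rewrite /nearest_proj; have := xgetI 0 np; set q := xget _ _.
move=> [Cq /(_ p Cp) le]; have e := pyth (o q Cq).
have : `|q - p| ^+ 2 <= 0.
  have : `|x - q| ^+ 2 <= `|x - p| ^+ 2 by rewrite lerXn2r // ?nnegrE.
  rewrite e; lra.
rewrite expr2 => h; apply/eqP; rewrite -subr_eq0 -normr_eq0.
have := normr_ge0 (q - p); move: h; move: `|_| => X h0 h1; apply/eqP; nra.
Qed.

Lemma proj_orth (A : set H) x a : closed_subspace A -> is_nearest A x a ->
  forall y, A y -> ip (x - a) y = 0.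
Proof.
case=> A0 AD AZ _ [Aa na] y Ay.
set d := ip (x - a) y; set N := `|y| ^+ 2.
have N0 : 0 <= N by exact: sqr_ge0.
set t := d / (N + 1).
have dt : d = t * (N + 1) by rewrite /t divfK // gt_eqF // ltr_wpDl.
have Ay' : A (a + t *: y) by apply: AD => //; apply: AZ.
have := na _ Ay'.
have -> : x - (a + t *: y) = (x - a) - t *: y by rewrite opprD addrA.
move=> le; have : `|x - a| ^+ 2 <= `|x - a - t *: y| ^+ 2 by rewrite lerXn2r // ?nnegrE.
rewrite (normB2 Hip (x - a)) (ipZr Hip) normrZ exprMn -/d -/N real_normK ?num_real // => h.
have : t = 0 by nra.
by move=> t0; rewrite dt t0 mul0r.
Qed.

Lemma nearest_exists (C : set H) x : nearest_proj C x != 0 -> is_nearest C x (nearest_proj C x).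
Proof.
rewrite /nearest_proj; case: xgetP => // _; by rewrite eqxx.
Qed.
End Proj.

Lemma esum_bound (R : realType) (Z : choiceType) (phi : Z -> R) :
  (forall k, 0 <= phi k) ->
  (\esum_(k in [set: Z]) (phi k)%:E < +oo)%E ->
  exists M : R, forall t, uniq t -> \sum_(k <- t) phi k <= M.
Proof.
move=> p0 fin.
have ge t : uniq t -> ((\sum_(k <- t) phi k)%:E <= \esum_(k in [set: Z]) (phi k)%:E)%E.
  move=> ut; apply: esum_ge; exists [set` t]; first by split; [exact: finite_seq|].
  by rewrite -(fsbig_seq _ _ ut) sumEFin.
have e0 := ge [::] isT; move: fin ge e0.
case: (\esum_(k in _) _) => [r| |] // _ ge _; exists r => t ut.
by have := ge t ut; rewrite lee_fin.
Qed.

Lemma usum_ip (R : realType) (H : normedModType R) (ip : H -> H -> R)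
  (Hip : is_inner_product ip) (Z : eqType) (f : Z -> H) l y :
  has_usum f l -> has_usum (fun k => ip (f k) y) (ip l y).
Proof.
move=> h e e0.
have e1 : 0 < e / (`|y| + 1) by rewrite divr_gt0 // ltr_wpDl.
have [s0 H0] := h _ e1; exists s0 => s us sub.
rewrite -(ip_suml Hip) -(ipBl Hip).
have := H0 s us sub; set x := `|_ - l| => hx.
have xa : 0 <= x by exact: normr_ge0.
apply: (le_lt_trans (CS Hip _ _)); rewrite -/x.
rewrite (le_lt_trans (y := x * (`|y| + 1))) //.
  by rewrite ler_wpM2l // lerDl.
by rewrite -ltr_pdivlMr // ltr_wpDl.
Qed.

Unset Implicit Arguments.
Theorem mainTheorem4 (R : realType) (H : completeNormedModType R)
  (ip : H -> H -> R) (Hip : is_inner_product ip)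
  (A : set H) (HA : closed_subspace A)
  (Z : countType) (h : Z -> H) (s : Z -> R)
  (h_orth : forall j k, j != k -> ip (h j) (h k) = 0)
  (h_nz : forall k, h k != 0)
  (Ah_nz : forall k, nearest_proj A (h k) != 0)
  (s_l2 : (\esum_(k in [set: Z]) ((s k / `|h k|) ^+ 2)%:E < +oo)%E) :
  let Cs := [set v : H | forall k, ip v (h k) = s k] in
  let P k := nearest_proj [set v | A v /\ ip v (h k) = s k] in
  let mu k := `|nearest_proj A (h k)| ^+ 2 / `|h k| ^+ 2 in
  (forall k, 0 < mu k <= 1) /\
  (forall u, A u ->
     has_usum (fun k => mu k *: (P k u - u)) (nearest_proj A (nearest_proj Cs u) - u)).
Proof.
move=> Cs P mu.

have HA' := HA; case: HA' => A0 AD AZ Acl.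
have AN x : A x -> A (- x) by move=> Ax; rewrite -scaleN1r; apply: AZ.
have AB x y : A x -> A y -> A (x - y) by move=> Ax Ay; apply: AD => //; apply: AN.
set a := fun k => nearest_proj A (h k).
have na k : is_nearest A (h k) (a k) by exact: nearest_exists.
have Aa k : A (a k) by case: (na k).
have oa k y : A y -> ip (h k - a k) y = 0 by move=> Ay; have := @proj_orth R H ip Hip A (h k) (a k) HA (na k) y Ay.
have hk0 k : 0 < `|h k| by rewrite normr_gt0; exact: h_nz.
have ak0 k : 0 < `|a k| by rewrite normr_gt0; exact: Ah_nz.
have pa k : `|h k| ^+ 2 = `|a k| ^+ 2 + `|h k - a k| ^+ 2.
  have := pyth Hip (x := h k) (p := a k) (y := 0).
  rewrite sub0r normrN subr0 => ->; first by rewrite addrC.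
  by apply: oa; apply: AN.
have iah k : ip (a k) (h k) = `|a k| ^+ 2.
  have := oa k (a k) (Aa k); rewrite (ipBl Hip) -(ipxx Hip) (ipC Hip (h k)). lra.
split.
  move=> k; rewrite /mu -/(a k).
  have := hk0 k; have := ak0 k; have := pa k; have := sqr_ge0 `|h k - a k|.
  move: (`|h k - a k| ^+ 2) (`|a k|) (`|h k|) => X y z hX e y0 z0.
  apply/andP; split; first by rewrite divr_gt0 // exprn_gt0.
  by rewrite ler_pdivrMr ?exprn_gt0 // mul1r e lerDl.
move=> u Au.
set c := fun k => ip u (h k) - s k.
set lam := fun k => c k / `|h k| ^+ 2.
set g := fun k => lam k *: h k.
set ga := fun k => lam k *: a k.
have horth (coef : Z -> R) j k : j != k -> ip (coef j *: h j) (coef k *: h k) = 0.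
  by move=> jk; rewrite (ipZl Hip) (ipZr Hip) h_orth // !mulr0.
have bessel t : uniq t -> \sum_(k <- t) ip u (h k) ^+ 2 / `|h k| ^+ 2 <= `|u| ^+ 2.
  move=> ut; set bet := fun k => ip u (h k) / `|h k| ^+ 2.
  set w := \sum_(k <- t) bet k *: h k.
  have e1 : ip u w = \sum_(k <- t) ip u (h k) ^+ 2 / `|h k| ^+ 2.
    rewrite (ip_sumr Hip); apply: eq_bigr => k _; rewrite (ipZr Hip) /bet; field.
    by rewrite ?expf_neq0 ?gt_eqF.
  have e2 : `|w| ^+ 2 = \sum_(k <- t) ip u (h k) ^+ 2 / `|h k| ^+ 2.
    rewrite /w (norm_orth_sum Hip) //; last exact: horth.
    apply: eq_bigr => k _.
    rewrite normrZ exprMn real_normK ?num_real // /bet; field; by rewrite ?expf_neq0 ?gt_eqF.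
  have := sqr_ge0 `|u - w|; rewrite (normB2 Hip) e1 e2; lra.
have [Ms hMs] := esum_bound (fun k => sqr_ge0 (s k / `|h k|)) s_l2.
have gsq k : `|g k| ^+ 2 = c k ^+ 2 / `|h k| ^+ 2.
  rewrite normrZ exprMn real_normK ?num_real // /lam; field; by rewrite ?expf_neq0 ?gt_eqF.
have cg : ucauchy g.
  apply: (ucauchy_orth Hip (M := 2 * `|u| ^+ 2 + 2 * Ms)); first exact: horth.
  move=> t ut; apply: (le_trans (y := \sum_(k <- t) (2 * (ip u (h k) ^+ 2 / `|h k| ^+ 2) + 2 * (s k / `|h k|) ^+ 2))).
    apply: ler_sum => k _; rewrite gsq /c.
    have hh := hk0 k; set X := `|h k|; set y := ip u (h k).
    apply: (le_trans (y := (2 * y ^+ 2 + 2 * s k ^+ 2) / X ^+ 2)).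
      rewrite ler_pM2r ?invr_gt0 ?exprn_gt0 //.
      have := sqr_ge0 (y + s k); rewrite !expr2; lra.
    rewrite le_eqVlt; apply/orP; left; apply/eqP; field; by rewrite gt_eqF.
  rewrite big_split /= -!mulr_sumr; apply: lerD; rewrite ler_pM2l //.
    exact: bessel.
  exact: hMs.
have [G HG] := ucauchy_usum cg.
have Asum t : A (\sum_(k <- t) ga k).
  by apply: sum_in => // k; apply: AZ.
have cga : ucauchy ga.
  apply: (ucauchy_le _ cg) => t ut.
  apply: le_sq; rewrite ?normr_ge0 //.
  have := pyth Hip (x := \sum_(k <- t) g k) (p := \sum_(k <- t) ga k) (y := 0).
  rewrite sub0r normrN subr0 => ->; first by rewrite lerDr sqr_ge0.
  have -> : \sum_(k <- t) g k - \sum_(k <- t) ga k = \sum_(k <- t) lam k *: (h k - a k).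
    by rewrite -sumrB; apply: eq_bigr => k _; rewrite scalerBr.
  rewrite (ip_suml Hip) big1 // => k _; rewrite (ipZl Hip) oa ?mulr0 //; exact: AN.
have [Q HQ] := ucauchy_usum cga.
have AQ : A Q by apply: (usum_closed HA _ HQ) => k; apply: AZ.
have ipg j k : ip (g k) (h j) = if k == j then c j else 0.
  case: eqP => [->|/eqP kj]; last by rewrite (ipZl Hip) h_orth ?mulr0.
  rewrite (ipZl Hip) (ipxx Hip) /lam; field; by rewrite gt_eqF.
have ipG j : ip G (h j) = c j.
  apply: (usum_uniq (usum_ip Hip (h j) HG)).
  apply: usum_ext (usum_delta j (c j)) => k; by rewrite ipg.
have PCs : nearest_proj Cs u = u - G.
  apply: (proj_eq Hip).
    by move=> j; rewrite (ipBl Hip) ipG /c; ring.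
  move=> y Cy; have -> : u - (u - G) = G by rewrite opprB addrC subrK.
  apply: (usum_uniq (usum_ip Hip (y - (u - G)) HG)).
  apply: usum_ext (usum0 _ _) => k.
  rewrite (ipZl Hip) (ipC Hip) (ipBl Hip) Cy.
  by have := ipG k; rewrite (ipBl Hip) ipG /c => _; rewrite (_ : ip u (h k) - c k = s k) ?subrr ?mulr0 // /c; ring.
have PA : nearest_proj A (u - G) = u - Q.
  apply: (proj_eq Hip); first exact: (AB _ _ Au AQ).
  move=> y Ay; have Ayq : A (y - (u - Q)) by apply: (AB) => //; exact: (AB).
  move: Ayq; set z := y - (u - Q) => Az.
  have -> : u - G - (u - Q) = Q - G by rewrite opprB [_ + (Q - u)]addrC addrA subrK.
  rewrite (ipBl Hip).
  have e1 := usum_ip Hip z HQ; have e2 := usum_ip Hip z HG.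
  suff -> : ip Q z = ip G z by rewrite subrr.
  apply: (usum_uniq e1); apply: usum_ext e2 => k.
  rewrite !(ipZl Hip); congr (_ * _); have := oa k z Az; rewrite (ipBl Hip); lra.
have Pk k : P k u = u - (c k / `|a k| ^+ 2) *: a k.
  apply: (proj_eq Hip).
    split; first by apply: (AB) => //; apply: AZ.
    rewrite (ipBl Hip) (ipZl Hip) iah /c; field; by rewrite gt_eqF.
  move=> y [Ay yh].
  have -> : u - (u - (c k / `|a k| ^+ 2) *: a k) = (c k / `|a k| ^+ 2) *: a k.
    by rewrite opprB addrC subrK.
  rewrite (ipZl Hip); set r := u - _.
  have Ar : A r by apply: (AB) => //; apply: AZ.
  have hr : ip r (h k) = s k by rewrite /r (ipBl Hip) (ipZl Hip) iah /c; field; rewrite gt_eqF.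
  have := oa k (y - r) (AB _ _ Ay Ar); rewrite (ipBl Hip) (ipC Hip (h k)) (ipBl Hip) yh hr subrr.
  move=> e; have -> : ip (a k) (y - r) = 0 by lra.
  by rewrite mulr0.
rewrite PCs PA.
have -> : u - Q - u = - Q by rewrite addrAC subrr add0r.
apply: usum_ext (usum_opp HQ) => k.
rewrite Pk /mu -/(a k) addrAC subrr add0r scalerN scalerA /ga /lam; congr (- (_ *: _)).
field; rewrite !gt_eqF //; exact: hk0.
Qed.
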